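(* In the two-bidder, two-configuration asymmetric setting below, assume $0<p<1$ and $r_1>r'_1>r'_2>r_2$ (uniform winner with incongruent loser). Write $p'=1-p$. Then there exist $q\in(0,p)$ and $q'\in(0,p')$ such that, with $$x=\frac{(p-q)r_2+q'r'_2}{p-q+q'},\quad y=\frac{qr_2+(p'-q')r'_2}{q+p'-q'},\quad z=\frac{qr_1+q'r'_1}{q+q'},$$ one has $x<y\le z$, and the information structure that sends, when the CTR vector is $(r_1,r_2)$, signal $(r_1,x)$ with probability $p-q$ and $(z,y)$ with probability $q$, and, when the CTR vector is $(r'_1,r'_2)$, signal $(z,x)$ with probability $q'$ and $(r'_1,y)$ with probability $p'-q'$, is calibrated, partially bundles both bidders (so is interior), and has revenue strictly larger than both full disclosure and no disclosure.
   Context: Setting. Two bidders with values $v_1=v_2=1$. The CTR vector equals $(r_1,r_2)$ with probability $p$ and $(r'_1,r'_2)$ with probability $1-p$, all entries in $[0,1]$, labeled so that $r_1\ge r'_1,r_2,r'_2$. An information structure is a finitely supported probability distribution on pairs $(r,s)\in[0,1]^2\times[0,1]^2$ whose $r$-marginal is this prior (the probabilities above are joint probabilities of (CTR vector, signal)). Given signals $s$, the winner $i^*$ maximizes $s_i$ (uniform tie-breaking), pays per click $s_j/s_{i^*}$ with $j\ne i^*$ (revenue $0$ if $s_{i^*}=0$), only upon a click, which occurs with probability $r_{i^*}$; revenue is $\mathbb{E}[r_{i^*}p_{i^*}]$. Calibrated: $\mathbb{E}[r_i\mid s_i=t]=t$ for every $i$ and every $t$ with $\Pr[s_i=t]>0$.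 Full disclosure: $s=r$ a.s.; no disclosure: $s_i=\mathbb{E}[r_i]$ a.s. Bidder $i$ is unbundled if $s_i=r_i$ a.s., fully bundled if $s_i=\mathbb{E}[r_i]$ a.s., and partially bundled otherwise; a structure is interior if both bidders are partially bundled. *)

(* Defs.v *)
From HB Require Import structures.
From mathcomp Require Import all_boot all_order all_algebra.
From mathcomp Require Import reals.
Set Implicit Arguments. Unset Strict Implicit. Unset Printing Implicit Defensive.
Import Order.TTheory GRing.Theory Num.Theory.
Local Open Scope ring_scope.

Section Auction.
Variable R : realType.

Definition vec := (R * R)%type.
(* Bidder index: true = bidder 1, false = bidder 2. *)
Definition coord (i : bool) (v : vec) : R := if i then v.1 else v.2.

(* An atom of a finitely supported distribution on (r, s): (probability, (r, s)). *)
Definition atom := (R * (vec * vec))%type.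
Definition weight (a : atom) : R := a.1.
Definition ctr (a : atom) : vec := a.2.1.
Definition sig (a : atom) : vec := a.2.2.

(* A prior: finitely supported distribution on CTR vectors. *)
Definition prior_t := seq (R * vec).

Definition prob (I : seq atom) (P : atom -> bool) : R :=
  \sum_(a <- I) (if P a then weight a else 0).
Definition expect (I : seq atom) (f : atom -> R) : R :=
  \sum_(a <- I) weight a * f a.

Definition in01 (x : R) := 0 <= x <= 1.

Definition is_info_structure (prior : prior_t) (I : seq atom) : Prop :=
  (forall a, a \in I ->
     [/\ 0 <= weight a, in01 (ctr a).1, in01 (ctr a).2, in01 (sig a).1
       & in01 (sig a).2]) /\
  (forall v : vec, prob I (fun a => ctr a == v) =
                   \sum_(b <- prior) (if b.2 == v then b.1 else 0)).

Definition calibrated (I : seq atom) : Prop :=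
  forall (i : bool) (t : R),
    0 < prob I (fun a => coord i (sig a) == t) ->
    (\sum_(a <- I) (if coord i (sig a) == t then weight a * coord i (ctr a) else 0))
      / prob I (fun a => coord i (sig a) == t) = t.

(* Expected payment (per realized CTR r) if bidder i wins with signals s:
   pays s_j / s_i per click, click w.p. r_i; 0 if s_i = 0. *)
Definition pay (i : bool) (r s : vec) : R :=
  if coord i s == 0 then 0 else coord i r * (coord (~~ i) s / coord i s).

Definition rev_atom (r s : vec) : R :=
  if s.2 < s.1 then pay true r s
  else if s.1 < s.2 then pay false r s
  else (pay true r s + pay false r s) / 2.

Definition revenue (I : seq atom) : R :=
  expect I (fun a => rev_atom (ctr a) (sig a)).

Definition unbundled (I : seq atom) (i : bool) : Prop :=
  forall a, a \in I -> 0 < weight a -> coord i (sig a) = coord i (ctr a).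
Definition fully_bundled (I : seq atom) (i : bool) : Prop :=
  forall a, a \in I -> 0 < weight a ->
    coord i (sig a) = expect I (fun b => coord i (ctr b)).
Definition partially_bundled (I : seq atom) (i : bool) : Prop :=
  ~ unbundled I i /\ ~ fully_bundled I i.
Definition interior (I : seq atom) : Prop :=
  partially_bundled I true /\ partially_bundled I false.

Definition full_disclosure (prior : prior_t) : seq atom :=
  [seq (b.1, (b.2, b.2)) | b <- prior].
Definition prior_mean (prior : prior_t) : vec :=
  (\sum_(b <- prior) b.1 * b.2.1, \sum_(b <- prior) b.1 * b.2.2).
Definition no_disclosure (prior : prior_t) : seq atom :=
  [seq (b.1, (b.2, prior_mean prior)) | b <- prior].

End Auction.

(* Main.v *)
Require Import Defs.
From HB Require Import structures.
From mathcomp Require Import all_boot all_order all_algebra.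
From mathcomp Require Import reals.
From mathcomp Require Import ring lra.
Import Order.TTheory GRing.Theory Num.Theory.
Local Open Scope ring_scope.

Lemma cancel1 (R : realType) (a b : R) : a != 0 -> a * (b / a) = b.
Proof. by move=> h; rewrite mulrCA divff // mulr1. Qed.

Lemma divlt2 (R : realType) (a b c d : R) : 0 < b -> 0 < d ->
  a * d < c * b -> a / b < c / d.
Proof.
move=> hb hd h; rewrite ltr_pdivlMr // mulrAC ltr_pdivrMr //.
Qed.

Lemma ltdiv (R : realType) (a b c : R) : 0 < b -> c * b < a -> c < a / b.
Proof. by move=> hb h; rewrite ltr_pdivlMr. Qed.

Lemma divlt (R : realType) (a b c : R) : 0 < b -> a < c * b -> a / b < c.
Proof. by move=> hb h; rewrite ltr_pdivrMr. Qed.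


Lemma bounds (R : realType) (p p' r1 r2 r1' r2' x y z : R) :
  0 < p -> 0 < p' -> r1' < r1 -> r2 < r2' ->
  x = ((p - p/2) * r2 + p'/4 * r2') / (p - p/2 + p'/4) ->
  y = (p/2 * r2 + (p' - p'/4) * r2') / (p/2 + p' - p'/4) ->
  z = (p/2 * r1 + p'/4 * r1') / (p/2 + p'/4) ->
  [/\ r2 < x, x < y, y < r2', r1' < z & z < r1].
Proof.
move=> hp hp' h1 h3 ex ey ez.
have Q1 : 0 < p' * (r2' - r2) by apply: mulr_gt0; lra.
have Q2 : 0 < p * (r2' - r2) by apply: mulr_gt0; lra.
have Q3 : 0 < p * (r1 - r1') by apply: mulr_gt0; lra.
have Q4 : 0 < p' * (r1 - r1') by apply: mulr_gt0; lra.
have P1 : 0 < p * p' * (r2' - r2).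
  by apply: mulr_gt0; [apply: mulr_gt0|]; lra.
split.
- by rewrite ex; apply: ltdiv; lra.
- by rewrite ex ey; apply: divlt2; lra.
- by rewrite ey; apply: divlt; lra.
- by rewrite ez; apply: ltdiv; lra.
- by rewrite ez; apply: divlt; lra.
Qed.

Lemma gain (R : realType) (p p' r1 r2 r1' r2' x y z : R) :
  0 < p -> 0 < z -> z < r1 -> x < y ->
  x * (p - p/2 + p'/4) = (p - p/2) * r2 + p'/4 * r2' ->
  y * (p/2 + p' - p'/4) = p/2 * r2 + (p' - p'/4) * r2' ->
  z * (p/2 + p'/4) = p/2 * r1 + p'/4 * r1' ->
  p * r2 + (p' * r2' + 0) <
  (p - p/2) * x + (p/2 * (r1 * (y / z)) + (p'/4 * (r1' * (x / z)) + ((p' - p'/4) * y + 0))).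
Proof.
move=> hp hz hzr hxy Dx Dy Dz.
have Dw : z * z^-1 = 1 by rewrite divff // gt_eqF.
set w := z^-1 in Dw *.
have hw : 0 < w by rewrite /w invr_gt0.
have K : 0 < p/2 * (r1 - z) * (y - x).
  by apply: mulr_gt0; [apply: mulr_gt0|]; lra.
have id : (p - p/2) * x + (p/2 * (r1 * (y * w)) + (p'/4 * (r1' * (x * w)) + ((p' - p'/4) * y + 0)))
   - (p * r2 + (p' * r2' + 0)) =
   (x * (p - p/2 + p'/4) - ((p - p/2) * r2 + p'/4 * r2'))
   + (y * (p/2 + p' - p'/4) - (p/2 * r2 + (p' - p'/4) * r2'))
   + (p'/4 * x + p/2 * y) * (z * w - 1)
   - w * x * (z * (p/2 + p'/4) - (p/2 * r1 + p'/4 * r1'))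
   + w * (p/2 * (r1 - z) * (y - x)) by ring.
rewrite Dx Dy Dz Dw !subrr mulr0 mulr0 !add0r ?subr0 in id. move: id; rewrite ?add0r ?subr0 => id.
by rewrite -subr_gt0 id oppr0 add0r mulr_gt0.
Qed.

Lemma derived (R : realType) (p p' r1 r2 r1' r2' x y z : R) :
 0 < p -> p' = 1 - p -> 0 < p' -> 0 <= r2 -> r1 <= 1 -> r1' < r1 -> r2' < r1' ->
 r2 < x -> x < y -> y < r2' -> r1' < z -> z < r1 ->
 [/\ [/\ 0 <= r1 <= 1, 0 <= r2 <= 1, 0 <= r1' <= 1, 0 <= r2' <= 1 & 0 <= x <= 1],
     [/\ 0 <= y <= 1, 0 <= z <= 1, 0 < r1, 0 < r1' & 0 < z],
     [/\ 0 < p - p/2, 0 < p/2, 0 < p'/4 & 0 < p' - p'/4],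
     [/\ x < r1, x < z, y < z & y < r1'] &
     [/\ p*r2 + (p'*r2' + 0) < p*r1 + (p'*r1' + 0), 0 < p*r1 + (p'*r1'+0) &
         r1 != (p - p/2)*r1 + (p/2*r1 + (p'/4*r1' + ((p'-p'/4)*r1' + 0)))]].
Proof.
move=> hp ep' hp' hr2 hr1 h1 h2 hx1 hxy hy2 hz1 hz2.
have Q1 : 0 < p * (r1 - r2) by apply: mulr_gt0; lra.
have Q2 : 0 < p' * (r1' - r2') by apply: mulr_gt0; lra.
have Q3 : 0 < p * r1 by apply: mulr_gt0; lra.
have Q4 : 0 <= p' * r1' by apply: mulr_ge0; lra.
have Q5 : 0 < (1 - p) * (r1 - r1') by apply: mulr_gt0; lra.
split; [split; apply/andP; split; lra | split; try (apply/andP; split); lra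
  | split; lra | split; lra | split; try lra].
apply/eqP => h; move: h; rewrite ep' => h; lra.
Qed.

Lemma ndlem (R : realType) (a b c d m : R) : a * b + (c * d + 0) != 0 ->
  a * (b * (m / (a * b + (c * d + 0)))) + (c * (d * (m / (a * b + (c * d + 0)))) + 0) = m.
Proof.
move=> h.
have -> : a * (b * (m / (a * b + (c * d + 0)))) + (c * (d * (m / (a * b + (c * d + 0)))) + 0)
  = m * (a * b + (c * d + 0)) / (a * b + (c * d + 0)) by ring.
by rewrite mulfK.
Qed.

Theorem mainTheorem10 (R : realType) (p r1 r2 r1' r2' : R) :
  0 < p -> p < 1 ->
  0 <= r2 -> r1 <= 1 ->
  r1' < r1 -> r2' < r1' -> r2 < r2' ->
  let p' := 1 - p in
  let prior : prior_t R := [:: (p, (r1, r2)); (p', (r1', r2'))] in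
  exists q q' : R,
    [/\ 0 < q, q < p, 0 < q' & q' < p'] /\
    let x := ((p - q) * r2 + q' * r2') / (p - q + q') in
    let y := (q * r2 + (p' - q') * r2') / (q + p' - q') in
    let z := (q * r1 + q' * r1') / (q + q') in
    let I : seq (atom R) :=
      [:: (p - q, ((r1, r2), (r1, x)));
          (q, ((r1, r2), (z, y)));
          (q', ((r1', r2'), (z, x)));
          (p' - q', ((r1', r2'), (r1', y)))] in
    [/\ x < y, y <= z,
        is_info_structure prior I,
        calibrated I
      & interior I] /\
    revenue (full_disclosure prior) < revenue I /\
    revenue (no_disclosure prior) < revenue I.
Proof.
move=> hp0 hp1 hr2 hr1 h1 h2 h3 p' prior.
have ep' : p' = 1 - p by [].
clearbody p'.
have hp' : 0 < p' by lra.
exists (p/2), (p'/4).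
split; first by split; lra.
move=> x y z I.
have ex : x = ((p - p/2) * r2 + p'/4 * r2') / (p - p/2 + p'/4) by [].
have ey : y = (p/2 * r2 + (p' - p'/4) * r2') / (p/2 + p' - p'/4) by [].
have ez : z = (p/2 * r1 + p'/4 * r1') / (p/2 + p'/4) by [].
have [hx1 hxy hy2 hz1 hz2] := @bounds _ _ _ _ _ _ _ _ _ _ hp0 hp' h1 h3 ex ey ez.
clearbody x y z.
have E1 := lt_eqF hz2. have E1' := gt_eqF hz2.
have E2 := lt_eqF hz1. have E2' := gt_eqF hz1.
have E3 := lt_eqF h1. have E3' := gt_eqF h1.
have E4 := lt_eqF hxy. have E4' := gt_eqF hxy.
have [[b1 b2 b3 b4 b5] [b6 b7 hr1p hr1'p hzp] [w1 w2 w3 w4] [hxr1 hxz hyz hyr1'] [hm hm1 hE]]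
  := @derived _ _ _ _ _ _ _ _ _ _ hp0 ep' hp' hr2 hr1 h1 h2 hx1 hxy hy2 hz1 hz2.
have hr21 : r2 < r1 by apply: lt_trans h3 (lt_trans h2 h1).
split; [split|].
- exact: hxy.
- exact: ltW.
- split.
    move=> a; rewrite /I !inE => /or4P [] /eqP -> /=;
    rewrite /weight /ctr /sig /in01 /=; split; try done; by apply: ltW.
  move=> v; rewrite /prob /I /prior !big_cons !big_nil /weight /ctr /=.
  by case: ((r1, r2) == v); case: ((r1', r2') == v); ring.
- move=> [] t; rewrite /prob /I !big_cons !big_nil /weight /ctr /sig /=.
  + case: (eqVneq r1 t) => [<-|n1].
      rewrite ?eqxx ?E1 ?E1' ?E2 ?E2' ?E3 ?E3' ?E4 ?E4' => _.
      by rewrite !addr0 mulrAC divff ?mul1r // lt0r_neq0.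
    case: (eqVneq z t) => [<-|n2].
      rewrite ?eqxx ?E1 ?E1' ?E2 ?E2' ?E3 ?E3' ?E4 ?E4' => _.
      by rewrite !addr0 !add0r ez.
    case: (eqVneq r1' t) => [<-|n3].
      rewrite ?eqxx ?E1 ?E1' ?E2 ?E2' ?E3 ?E3' ?E4 ?E4' => _.
      by rewrite !addr0 !add0r mulrAC divff ?mul1r // lt0r_neq0.
    by rewrite !addr0 ltxx.
  + case: (eqVneq x t) => [<-|n1].
      rewrite ?eqxx ?E1 ?E1' ?E2 ?E2' ?E3 ?E3' ?E4 ?E4' => _.
      by rewrite !addr0 !add0r ex.
    case: (eqVneq y t) => [<-|n2].
      rewrite ?eqxx ?E1 ?E1' ?E2 ?E2' ?E3 ?E3' ?E4 ?E4' => _.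
      by rewrite !addr0 !add0r ey addrA.
    by rewrite !addr0 ltxx.
- rewrite /interior /partially_bundled /unbundled /fully_bundled /expect /I !big_cons !big_nil /=.
  split; split.
  + move=> H; have := H (p/2, (r1, r2, (z, y))).
    rewrite !in_cons eqxx !orbT /= => /(_ isT w2) hz.
    by move: hz2; rewrite hz ltxx.
  + move=> H; have := H (p - p/2, (r1, r2, (r1, x))).
    rewrite !in_cons eqxx /= => /(_ isT w1) hh.
    by move/eqP: hE; apply.
  + move=> H; have := H (p - p/2, (r1, r2, (r1, x))).
    rewrite !in_cons eqxx /= => /(_ isT w1) hh.
    by move: hx1; rewrite hh ltxx.
  + move=> H; have := H (p - p/2, (r1, r2, (r1, x))).
    rewrite !in_cons eqxx /= => /(_ isT w1) hh.
    have := H (p/2, (r1, r2, (z, y))).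
    rewrite !in_cons eqxx !orbT /= => /(_ isT w2) hh'.
    by move: hxy; rewrite hh hh' ltxx.
have Dx : x * (p - p/2 + p'/4) = (p - p/2) * r2 + p'/4 * r2'.
  by rewrite ex divfK //; apply: lt0r_neq0; lra.
have Dy : y * (p/2 + p' - p'/4) = p/2 * r2 + (p' - p'/4) * r2'.
  by rewrite ey divfK //; apply: lt0r_neq0; lra.
have Dz : z * (p/2 + p'/4) = p/2 * r1 + p'/4 * r1'.
  by rewrite ez divfK //; apply: lt0r_neq0; lra.
have G := @gain R p p' r1 r2 r1' r2' x y z hp0 hzp hz2 hxy Dx Dy Dz.
rewrite /revenue /expect /no_disclosure /full_disclosure /prior_mean /prior /= !big_cons !big_nil /=.
rewrite /rev_atom /pay /ctr /sig /=.
rewrite hxr1 hyz hxz hyr1' hm hr21 h2 /=.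
rewrite (gt_eqF hr1p) (gt_eqF hzp) (gt_eqF hr1'p) (gt_eqF hm1) /=.
rewrite !(@cancel1 R r1 _ (lt0r_neq0 hr1p)) !(@cancel1 R r1' _ (lt0r_neq0 hr1'p)).
rewrite (@ndlem R p r1 p' r1' _ (lt0r_neq0 hm1)).
by split.
Qed.
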